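(* Fix $1\le p<2$ and constants $C_0,C_1>0$. There are constants $\omega_0$ and $c>0$ such that for all integers $d\ge2$, $n\ge d^2$, every $\omega\ge\omega_0$ and every fixed $y\in\mathbb{R}^n$: (i) if $\Pi$ is an $R\times n$ CountSketch matrix with $R=\lceil C_0d^2\rceil$, then with probability at least $1-\exp(-c\,\omega d\log d)$, $\|\Pi(y_{1:d^2})\|_p\le(\omega d\log d)^{1-1/p}\|y\|_p$; (ii) if $2<B\le d$ and $\Pi$ is an $R\times n$ OSNAP matrix with $R=\lceil C_0Bd\log d\rceil$ rows and $s=\lceil C_1\log_B d\rceil\le R$ non-zeros per column, then with probability at least $1-\exp(-c\,\omega d\log d)$, $\|\Pi(y_{1:d^2})\|_p\le s^{1/p-1/2}(\omega d\log d)^{1-1/p}\|y\|_p$.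
   Context: For $u\in\mathbb{R}^n$ and $1\le a\le b\le n$, $u_{a:b}$ denotes the vector whose $i$-th coordinate equals $u_i$ if $i\in[a,b]$ and $0$ otherwise. An $R\times n$ CountSketch matrix: independently for each column $j$, a uniformly random row $h(j)\in[R]$ is chosen and $\Pi_{h(j),j}$ is a uniformly random sign in $\{-1,1\}$; all other entries are $0$. An $R\times n$ OSNAP matrix with $s$ non-zeros per column: independently for each column, $s$ distinct rows are chosen uniformly at random and those entries are independently set to $\pm s^{-1/2}$ with uniformly random sign; all other entries are $0$. $\|y\|_p=(\sum_i|y_i|^p)^{1/p}$. *)

(* Defs.v *)
From Stdlib Require Import Reals.
From mathcomp Require Import all_boot.
Set Implicit Arguments. Unset Strict Implicit. Unset Printing Implicit Defensive.

Local Open Scope R_scope.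

(* x^a for x >= 0, with the convention 0^a = 0 (used with a > 0). *)
Definition rpow (x a : R) : R := if Rlt_dec 0 x then Rpower x a else 0.

Definition sumR (k : nat) (F : 'I_k -> R) : R := \big[Rplus/0]_(i < k) F i.

Definition pnorm (p : R) (k : nat) (v : 'I_k -> R) : R :=
  rpow (sumR (fun i => rpow (Rabs (v i)) p)) (/ p).

(* u_{1:k}: keep coordinates 1..k (0-indexed: i < k), zero elsewhere. *)
Definition restrict (k n : nat) (y : 'I_n -> R) : 'I_n -> R :=
  fun i => if (i < k)%N then y i else 0.

Definition sgnR (b : bool) : R := if b then 1 else -1.

Definition Rleb (x y : R) : bool := if Rle_dec x y then true else false.

Definition mxapply (m n : nat) (P : 'I_m -> 'I_n -> R) (v : 'I_n -> R) : 'I_m -> R :=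
  fun r => sumR (fun j => P r j * v j).

(* A sample: for each column j, a row h(j) and a sign. Uniform over all samples. *)
Definition CS_config (m n : nat) := {ffun 'I_n -> 'I_m * bool}.

Definition CS_matrix (m n : nat) (w : CS_config m n) : 'I_m -> 'I_n -> R :=
  fun r j => if (w j).1 == r then sgnR (w j).2 else 0.

Definition probCS (m n : nat) (E : CS_config m n -> bool) : R :=
  INR #|[set w : CS_config m n | E w]| / INR #|[set: CS_config m n]|.

(* A sample: for each column j, a set of rows (required to have exactly s
   elements) and a sign for every row (only the signs on the chosen rows matter;
   uniform signs on all rows give independent uniform signs on chosen rows). *)
Definition OS_config (m n : nat) := {ffun 'I_n -> {set 'I_m} * {ffun 'I_m -> bool}}.

Definition OS_valid (m n s : nat) (w : OS_config m n) : bool :=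
  [forall j, #|(w j).1| == s].

Definition OS_matrix (m n s : nat) (w : OS_config m n) : 'I_m -> 'I_n -> R :=
  fun r j => if r \in (w j).1 then sgnR ((w j).2 r) / sqrt (INR s) else 0.

Definition probOS (m n s : nat) (E : OS_config m n -> bool) : R :=
  INR #|[set w : OS_config m n | OS_valid s w && E w]|
  / INR #|[set w : OS_config m n | OS_valid s w]|.

(* Main.v *)
Require Import Defs.
From Stdlib Require Import Reals.
From mathcomp Require Import all_boot.
From HB Require Import structures.
From Stdlib Require Import Lra Lia.
From mathcomp Require Import zify.

Module P1.
Set Implicit Arguments. Unset Strict Implicit. Unset Printing Implicit Defensive.
Local Open Scope R_scope.

HB.instance Definition Rplus_monoid :=
  Monoid.isComLaw.Build R 0 Rplus
    (fun a b c => esym (Rplus_assoc a b c)) Rplus_comm Rplus_0_l.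

Section Sums.
Variable I : finType.

Lemma sum_le (P : pred I) (F G : I -> R) :
  (forall i, P i -> F i <= G i) ->
  \big[Rplus/0]_(i | P i) F i <= \big[Rplus/0]_(i | P i) G i.
Proof.
move=> H; apply: (big_ind2 (fun a b => a <= b)); [lra| |].
- by move=> ? ? ? ? ? ?; lra.
- exact: H.
Qed.

Lemma sum_ge0 (P : pred I) (F : I -> R) :
  (forall i, P i -> 0 <= F i) -> 0 <= \big[Rplus/0]_(i | P i) F i.
Proof.
move=> H; apply: (big_ind (fun a => 0 <= a)); [lra| |exact: H].
by move=> ? ? ? ?; lra.
Qed.

Lemma sum_mull (P : pred I) (F : I -> R) c :
  c * \big[Rplus/0]_(i | P i) F i = \big[Rplus/0]_(i | P i) (c * F i).
Proof.
apply: (big_rec2 (fun a b => c * a = b)); first by ring.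
by move=> i a b _ <-; ring.
Qed.

Lemma sum_abs (P : pred I) (F : I -> R) :
  Rabs (\big[Rplus/0]_(i | P i) F i) <= \big[Rplus/0]_(i | P i) Rabs (F i).
Proof.
apply: (big_rec2 (fun a b => Rabs a <= b)); first by rewrite Rabs_R0; lra.
move=> i a b _ H; apply: Rle_trans (Rabs_triang _ _) _; lra.
Qed.

Lemma sum_const (A : {pred I}) c :
  \big[Rplus/0]_(i in A) c = INR #|A| * c.
Proof.
rewrite big_const; elim: #|A| => [|k IH]; first by rewrite /=; ring.
rewrite [iter _ _ _]/= IH S_INR; ring.
Qed.

Lemma sum_split (P : pred I) (F G : I -> R) :
  \big[Rplus/0]_(i | P i) (F i + G i) =
  \big[Rplus/0]_(i | P i) F i + \big[Rplus/0]_(i | P i) G i.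
Proof. exact: big_split. Qed.

End Sums.

Lemma rpow_pos x a : 0 < x -> rpow x a = Rpower x a.
Proof. by rewrite /rpow; destruct (Rlt_dec 0 x). Qed.

Lemma rpow_nonpos x a : x <= 0 -> rpow x a = 0.
Proof. move=> H; rewrite /rpow; destruct (Rlt_dec 0 x) => //; lra. Qed.

Lemma rpow_ge0 x a : 0 <= rpow x a.
Proof.
rewrite /rpow; destruct (Rlt_dec 0 x); last (right; reflexivity).
rewrite /Rpower; apply: Rlt_le; exact: exp_pos.
Qed.

Lemma rpow_gt0 x a : 0 < x -> 0 < rpow x a.
Proof. by move=> H; rewrite rpow_pos //; exact: exp_pos. Qed.

Lemma rpow_le x y a : 0 <= a -> 0 <= x <= y -> rpow x a <= rpow y a.
Proof.
move=> Ha Hxy; case: (Rle_lt_dec x 0) => Hx.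
  rewrite (rpow_nonpos _ Hx); exact: rpow_ge0.
rewrite !rpow_pos; try lra; apply: Rle_Rpower_l; lra.
Qed.

Lemma rpow_mul x y a : 0 <= x -> 0 <= y -> rpow (x * y) a = rpow x a * rpow y a.
Proof.
move=> Hx Hy; case: (Rle_lt_dec x 0) => Hx'.
  have -> : x = 0 by lra. rewrite Rmult_0_l !(rpow_nonpos _ (Rle_refl 0)); ring.
case: (Rle_lt_dec y 0) => Hy'.
  have -> : y = 0 by lra. rewrite Rmult_0_r !(rpow_nonpos _ (Rle_refl 0)); ring.
rewrite !rpow_pos; try nra. by rewrite Rpower_mult_distr.
Qed.

Lemma rpow_rpow x a b : rpow (rpow x a) b = rpow x (a * b).
Proof.
case: (Rle_lt_dec x 0) => Hx.
  by rewrite (rpow_nonpos _ Hx) (rpow_nonpos _ (Rle_refl 0)) (rpow_nonpos _ Hx).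
by rewrite !rpow_pos //; [rewrite Rpower_mult | exact: exp_pos].
Qed.

Lemma rpow_plus x a b : 0 < x -> rpow x (a + b) = rpow x a * rpow x b.
Proof. by move=> H; rewrite !rpow_pos // Rpower_plus Rmult_comm. Qed.

Lemma rpow1 x : 0 <= x -> rpow x 1 = x.
Proof.
move=> H; case: (Rle_lt_dec x 0) => Hx.
  by rewrite rpow_nonpos //; lra.
by rewrite rpow_pos // Rpower_1.
Qed.

Lemma rpow0 x : 0 < x -> rpow x 0 = 1.
Proof. by move=> H; rewrite rpow_pos // Rpower_O. Qed.

Lemma bernoulli z p : 1 <= p -> 0 < z -> 1 + p * (z - 1) <= Rpower z p.
Proof.
move=> Hp Hz.
have -> : Rpower z p = z * Rpower z (p - 1).
  by rewrite -{2}(Rpower_1 z) // -Rpower_plus; f_equal; ring.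
have H1 : 1 + (p - 1) * ln z <= Rpower z (p - 1) by exact: exp_ineq1_le.
have H2 : 1 - / z <= ln z.
  have := exp_ineq1_le (ln (/ z)). rewrite exp_ln; last exact: Rinv_0_lt_compat.
  rewrite ln_Rinv //; lra.
have H3 : z * (1 - / z) = z - 1 by field; lra.
have H4 : (z - 1) <= z * ln z.
  rewrite -H3; apply: Rmult_le_compat_l; lra.
nra.
Qed.

Lemma tangent t mu p : 1 <= p -> 0 <= t -> 0 < mu ->
  rpow mu p + p * rpow mu (p - 1) * (t - mu) <= rpow t p.
Proof.
move=> Hp Ht Hmu.
have Emu : rpow mu p = mu * rpow mu (p - 1).
  rewrite -{2}(rpow1 (Rlt_le _ _ Hmu)) -rpow_plus //; f_equal; ring.
have Hpos := rpow_gt0 (p - 1) Hmu.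
case: (Rle_lt_dec t 0) => Ht'.
  have -> : t = 0 by lra. rewrite (rpow_nonpos _ (Rle_refl 0)) Emu.
  have : 0 <= (p - 1) * (mu * rpow mu (p - 1)) by apply: Rmult_le_pos; nra.
  nra.
have Hb := bernoulli Hp (Rdiv_lt_0_compat _ _ Ht' Hmu).
have Et : rpow t p = rpow mu p * rpow (t / mu) p.
  rewrite -rpow_mul; try (apply: Rlt_le; try apply: Rdiv_lt_0_compat; lra).
  f_equal; field; lra.
rewrite Et (@rpow_pos (t / mu) p (Rdiv_lt_0_compat _ _ Ht' Hmu)).
have Hmp : 0 < rpow mu p by exact: rpow_gt0.
have : rpow mu p * (1 + p * (t / mu - 1)) <= rpow mu p * Rpower (t / mu) p.
  by apply: Rmult_le_compat_l; lra.
have -> : rpow mu p * (1 + p * (t / mu - 1)) = rpow mu p + p * rpow mu (p - 1) * (t - mu).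
  rewrite Emu; field; lra.
done.
Qed.

Lemma power_mean (I : finType) (A : {pred I}) (t : I -> R) p :
  1 <= p -> (forall i, 0 <= t i) ->
  rpow (\big[Rplus/0]_(i in A) t i) p <=
  rpow (INR #|A|) (p - 1) * \big[Rplus/0]_(i in A) rpow (t i) p.
Proof.
move=> Hp Ht; set T := \big[Rplus/0]_(i in A) t i.
have HR : 0 <= \big[Rplus/0]_(i in A) rpow (t i) p by apply: sum_ge0 => i _; apply: rpow_ge0.
case: (Rle_lt_dec T 0) => HT.
  rewrite rpow_nonpos //; apply: Rmult_le_pos => //; exact: rpow_ge0.
have HA : (0 < #|A|)%N.
  rewrite lt0n; apply/negP => /eqP /card0_eq H0.
  move: HT; rewrite /T big_pred0 // => ?; lra.
set N := INR #|A|.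
have HN : 0 < N by apply: lt_0_INR; apply/ltP.
set mu := T / N.
have Hmu : 0 < mu by apply: Rdiv_lt_0_compat.
have Hsum : \big[Rplus/0]_(i in A) (rpow mu p + p * rpow mu (p - 1) * (t i - mu))
            = N * rpow mu p.
  rewrite sum_split sum_const.
  have -> : \big[Rplus/0]_(i in A) (p * rpow mu (p - 1) * (t i - mu))
          = p * rpow mu (p - 1) * (T + - (N * mu)).
    rewrite -sum_mull; congr (_ * _).
    rewrite (eq_bigr (fun i => t i + - mu)); last by move=> i _; ring.
    by rewrite sum_split sum_const /T -/N; ring.
  rewrite -/N /mu; field; lra.
have Hle : N * rpow mu p <= \big[Rplus/0]_(i in A) rpow (t i) p.
  rewrite -Hsum; apply: sum_le => i _; exact: tangent.
have ET : T = N * mu by rewrite /mu; field; lra.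
rewrite ET rpow_mul; try lra.
have -> : rpow N p = rpow N (p - 1) * N.
  rewrite -{3}(rpow1 (Rlt_le _ _ HN)) -rpow_plus //; f_equal; ring.
have := rpow_gt0 (p - 1) HN; nra.
Qed.

Lemma sum_in_cond (I : finType) (A : {pred I}) (F : I -> R) :
  \big[Rplus/0]_(i in A) F i = \big[Rplus/0]_(i : I) (if i \in A then F i else 0).
Proof. by rewrite big_mkcond. Qed.

Lemma det_bound m n (P : 'I_m -> 'I_n -> R) (supp : 'I_m -> 'I_n -> bool)
  (y : 'I_n -> R) (D : nat) p al K (s : nat) :
  1 <= p -> 0 <= al -> 0 < K ->
  (forall r j, ~~ supp r j -> P r j = 0) ->
  (forall r j, Rabs (P r j) <= al) ->
  (forall r : 'I_m, INR #|[set j : 'I_n | (j < D)%N && supp r j]| <= K) ->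
  (forall j : 'I_n, (#|[set r : 'I_m | supp r j]| <= s)%N) ->
  sumR (fun r => rpow (Rabs (mxapply P (restrict D y) r)) p)
   <= rpow K (p - 1) * rpow al p * INR s * sumR (fun j => rpow (Rabs (y j)) p).
Proof.
move=> Hp Hal HK H0 Hal' HL Hs.
set A := fun r : 'I_m => [set j : 'I_n | (j < D)%N && supp r j].
set g := fun j => rpow (Rabs (y j)) p.
have Hg : forall j, 0 <= g j by move=> j; apply: rpow_ge0.
have step1 : forall r, Rabs (mxapply P (restrict D y) r)
     <= \big[Rplus/0]_(j in A r) (al * Rabs (y j)).
  move=> r; rewrite /mxapply /sumR; apply: Rle_trans (sum_abs _ _) _.
  rewrite sum_in_cond; apply: sum_le => j _.
  rewrite /A inE /restrict Rabs_mult.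
  case: (boolP (j < D)%N) => hj /=; case: (boolP (supp r j)) => hs /=.
  - apply: Rmult_le_compat_r; [exact: Rabs_pos | exact: Hal'].
  - by rewrite H0 // Rabs_R0; lra.
  - by rewrite Rabs_R0; lra.
  - by rewrite Rabs_R0; lra.
have step2 : forall r, rpow (Rabs (mxapply P (restrict D y) r)) p
     <= rpow K (p - 1) * rpow al p * \big[Rplus/0]_(j in A r) g j.
  move=> r; apply: Rle_trans.
    apply: rpow_le; first lra. split; first exact: Rabs_pos. exact: step1.
  apply: Rle_trans; first by apply: power_mean => // j; apply: Rmult_le_pos => //; exact: Rabs_pos.
  have E : \big[Rplus/0]_(j in A r) rpow (al * Rabs (y j)) p
         = rpow al p * \big[Rplus/0]_(j in A r) g j.
    rewrite sum_mull; apply: eq_bigr => j _; rewrite rpow_mul //; exact: Rabs_pos.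
  rewrite E -Rmult_assoc; apply: Rmult_le_compat_r.
    by apply: sum_ge0 => j _; exact: Hg.
  apply: Rmult_le_compat_r; first exact: rpow_ge0.
  apply: rpow_le; first lra. split; [exact: pos_INR | exact: HL].
have step3 : \big[Rplus/0]_(r < m) \big[Rplus/0]_(j in A r) g j
             <= INR s * sumR g.
  under eq_bigr => r _ do rewrite sum_in_cond.
  rewrite exchange_big /sumR sum_mull; apply: sum_le => j _.
  rewrite -(big_mkcond (fun r => j \in A r) (fun _ => g j)) /=.
  rewrite (eq_bigl (fun i => i \in [set i : 'I_m | j \in A i])); last by move=> i; rewrite inE.
  rewrite sum_const; apply: Rmult_le_compat_r; first exact: Hg.
  apply: le_INR; apply/leP; apply: leq_trans (Hs j).
  by apply: subset_leq_card; apply/subsetP => i; rewrite !inE => /andP [].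
rewrite /sumR; apply: Rle_trans.
  by apply: sum_le => r _; exact: (step2 r).
rewrite -sum_mull.
have hc : 0 <= rpow K (p - 1) * rpow al p by apply: Rmult_le_pos; exact: rpow_ge0.
apply: Rle_trans (Rmult_le_compat_l _ _ _ hc step3) _; right; rewrite /sumR; ring.
Qed.

End P1.
Import P1.

Module P2.
Set Implicit Arguments. Unset Strict Implicit. Unset Printing Implicit Defensive.

Section Count.
Variables (T : finType) (V hit : pred T) (n D k : nat).

Definition Wset := [set w : {ffun 'I_n -> T} | [forall j, V (w j)]].
Definition Lset (w : {ffun 'I_n -> T}) := [set j : 'I_n | (j < D)%N && hit (w j)].
Definition Dset := [set j : 'I_n | (j < D)%N].

Lemma card_Dset : (D <= n)%N -> #|Dset| <= D.
Proof.
move=> hDn.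
have : Dset \subset [set widen_ord hDn x | x in 'I_D].
  apply/subsetP => j; rewrite inE => hj; apply/imsetP.
  exists (Ordinal hj) => //; exact: val_inj.
move/subset_leq_card => H; apply: leq_trans H _.
by apply: leq_trans (leq_imset_card _ _) _; rewrite card_ord.
Qed.

Lemma card_fam (S : {set 'I_n}) :
  #|[set w in Wset | S \subset Lset w]| <=
  #|[pred t | V t && hit t]| ^ #|S| * #|V| ^ #|~: S|.
Proof.
pose F := fun j : 'I_n => if j \in S then [pred t | V t && hit t] else [pred t | V t].
have : [set w in Wset | S \subset Lset w] \subset family F.
  apply/subsetP => w; rewrite !inE => /andP [/forallP HW /subsetP HS].
  apply/familyP => j; rewrite /F; case: ifP => hj.
    by move: (HS j hj); rewrite inE /= => /andP [_ H]; rewrite inE /= HW H.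
  by rewrite inE /= HW.
move/subset_leq_card => H; apply: leq_trans H _.
rewrite card_family foldrE big_map big_enum /=.
rewrite (bigID (fun j => j \in S)) /=.
apply: leq_mul.
  rewrite (eq_bigr (fun _ => #|[pred t | V t && hit t]|)); last first.
    by move=> j hj; rewrite /F hj.
  rewrite prod_nat_const; apply: eq_leq; congr (_ ^ _); apply: eq_card => j.
rewrite (eq_bigr (fun _ => #|V|)); last first.
  by move=> j hj; rewrite /F (negbTE hj); apply: eq_card.
rewrite prod_nat_const; apply: eq_leq; congr (_ ^ _).
by apply: eq_card => j; rewrite !inE.
Qed.


Lemma count_row : (D <= n)%N ->
  #|[set w in Wset | (k <= #|Lset w|)%N]| <=
  'C(D, k) * (#|[pred t | V t && hit t]| ^ k * #|V| ^ (n - k)).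
Proof.
move=> hDn; set Q := (#|[pred t | V t && hit t]| ^ k * #|V| ^ (n - k)).
have H1 : #|[set w in Wset | (k <= #|Lset w|)%N]| <=
          \sum_(w in Wset) 'C(#|Lset w|, k).
  rewrite -sum1_card big_mkcond [X in _ <= X]big_mkcond /=.
  apply: leq_sum => w _; rewrite inE.
  case: (w \in Wset) => //=; case: ifP => // hk.
  by rewrite bin_gt0.
apply: leq_trans H1 _.
under eq_bigr => w _ do rewrite -cards_draws -sum1_card big_mkcond /=.
rewrite exchange_big /=.
have H2 : forall S : {set 'I_n},
   \sum_(w in Wset) (if S \in [set A : {set 'I_n} | A \subset Lset w & #|A| == k] then 1 else 0)
   <= (if S \in [set A : {set 'I_n} | A \subset Dset & #|A| == k] then Q else 0).
  move=> S; rewrite inE.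
  case: (boolP (S \subset Dset)) => hSD /=; last first.
    rewrite big1 // => w _; rewrite inE.
    case: (boolP (S \subset Lset w)) => //= hL; exfalso; move/negP: hSD; apply.
    apply: subset_trans hL _; apply/subsetP => j; rewrite !inE => /andP [] //.
  case: (boolP (#|S| == k)) => hk /=; last first.
    by rewrite big1 // => w _; rewrite inE (negbTE hk) andbF.
  have -> : \sum_(w in Wset) (if S \in [set A : {set 'I_n} | A \subset Lset w & #|A| == k] then 1 else 0)
     = #|[set w in Wset | S \subset Lset w]|.
    rewrite -sum1_card [in RHS]big_mkcond [in LHS]big_mkcond /=; apply: eq_bigr => w _.
    by rewrite !inE hk andbT; case: [forall j, V (w j)].
  apply: (leq_trans (card_fam S)).
  have hC : #|~: S| = n - #|S|.
    by have := cardsC S; rewrite card_ord; lia.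
  by rewrite hC (eqP hk).
apply: leq_trans; first by apply: leq_sum => S _; exact: H2.
rewrite -big_mkcond /= sum_nat_const cards_draws.
by apply: leq_mul => //; apply: leq_bin2l; apply: card_Dset.
Qed.
End Count.

End P2.
Import P2.

Module P3.
Set Implicit Arguments. Unset Strict Implicit. Unset Printing Implicit Defensive.

Lemma card_Wset (T : finType) (V : pred T) n : #|Wset V n| = (#|V| ^ n)%N.
Proof.
have -> : #|Wset V n| = #|family (fun _ : 'I_n => [pred t | V t])|.
  apply: eq_card => w; rewrite inE; apply/forallP/familyP => H j.
    by rewrite inE /= H.
  by have := H j; rewrite inE.
rewrite card_family foldrE big_map big_enum /=.
rewrite (eq_bigr (fun _ => #|V|)); last by move=> j _; apply: eq_card.
by rewrite prod_nat_const card_ord.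
Qed.

Lemma card_sum (I : finType) (A : {set I}) :
  #|A| = (\sum_(i : I) (if i \in A then 1 else 0))%N.
Proof. by rewrite -sum1_card big_mkcond. Qed.

Lemma union_count (T : finType) (V : pred T) (m n D k : nat) (hit : 'I_m -> pred T)
   (E : {ffun 'I_n -> T} -> bool) :
  (forall w, w \in Wset V n -> (forall r, (#|Lset (hit r) D w| < k)%N) -> E w) ->
  (#|Wset V n| <= #|[set w in Wset V n | E w]| +
     \sum_(r < m) #|[set w in Wset V n | (k <= #|Lset (hit r) D w|)%N]|)%N.
Proof.
move=> HE.
rewrite card_sum [#|[set w in Wset V n | E w]|]card_sum.
rewrite (eq_bigr (fun r : 'I_m => \sum_(w : {ffun 'I_n -> T})
   (if w \in [set w in Wset V n | (k <= #|Lset (hit r) D w|)%N] then 1 else 0))%N);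
  last by move=> r _; apply: card_sum.
rewrite exchange_big /= -big_split /=.
apply: leq_sum => w _.
case: (boolP (w \in Wset V n)) => hw //.
case: (boolP (E w)) => he; first by rewrite inE hw he.
rewrite inE hw (negbTE he) /= add0n.
case: (pickP (fun r => (k <= #|Lset (hit r) D w|)%N)) => [r hr | H]; last first.
  by move/negP: he; case; apply: HE => // r; rewrite ltnNge H.
rewrite (bigD1 r) //= inE hw hr /=; lia.
Qed.

Local Open Scope R_scope.

Lemma INR_sum (I : finType) (F : I -> nat) :
  INR (\sum_(i : I) F i)%N = \big[Rplus/0]_(i : I) INR (F i).
Proof.
apply: (big_morph INR) => [x y|]; [exact: plus_INR | done].
Qed.

Lemma INR_expn a b : INR (a ^ b)%N = INR a ^ b.
Proof.
elim: b => [|b IH]; first by rewrite expn0.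
by rewrite expnS mult_INR IH.
Qed.

Lemma sum_const_all (I : finType) (c : R) :
  \big[Rplus/0]_(i : I) c = INR #|I| * c.
Proof. by rewrite -sum_const. Qed.

Lemma prob_bound (T : finType) (V : pred T) (m n D k : nat) (hit : 'I_m -> pred T)
   (E : {ffun 'I_n -> T} -> bool) (q : R) :
  (D <= n)%N -> (0 < #|V|)%N ->
  (forall w, w \in Wset V n -> (forall r, (#|Lset (hit r) D w| < k)%N) -> E w) ->
  (forall r, INR #|[pred t | V t && hit r t]| <= q * INR #|V|) ->
  INR #|[set w in Wset V n | E w]| / INR #|Wset V n| >= 1 - INR m * (INR 'C(D, k) * q ^ k).
Proof.
move=> hDn hV HE Hq.
set v := INR #|V|.
have hv : 0 < v by apply: lt_0_INR; apply/ltP.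
have HN : INR #|Wset V n| = v ^ n by rewrite card_Wset INR_expn.
have Hbad : forall r, INR #|[set w in Wset V n | (k <= #|Lset (hit r) D w|)%N]|
                      <= INR 'C(D, k) * q ^ k * v ^ n.
  move=> r; have H := count_row V (hit r) k hDn.
  apply: Rle_trans; first by apply: le_INR; apply/leP; exact: H.
  case: (leqP k n) => hkn; last first.
    rewrite bin_small; last by apply: leq_trans hkn.
    by rewrite Rmult_0_l !Rmult_0_l; right.
  rewrite mult_INR mult_INR !INR_expn -/v.
  have ha := Hq r.
  have ha0 : 0 <= INR #|[pred t | V t && hit r t]| by apply: pos_INR.
  have Hpow : INR #|[pred t | V t && hit r t]| ^ k <= (q * v) ^ k.
    apply: pow_incr; split => //.
  have Evn : v ^ n = v ^ k * v ^ (n - k).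
    by rewrite -pow_add; congr (_ ^ _); lia.
  rewrite Evn; rewrite Rpow_mult_distr in Hpow.
  have hC : 0 <= INR 'C(D, k) by apply: pos_INR.
  have hvk : 0 <= v ^ (n - k) by apply: pow_le; lra.
  have := Rmult_le_compat_r _ _ _ hvk Hpow.
  have := pow_le _ k (Rlt_le _ _ hv).
  nra.
have HU := union_count HE.
have HU' : v ^ n <= INR #|[set w in Wset V n | E w]| +
    INR m * (INR 'C(D, k) * q ^ k * v ^ n).
  rewrite -HN; apply: Rle_trans; first by apply: le_INR; apply/leP; exact: HU.
  rewrite plus_INR; apply: Rplus_le_compat_l.
  rewrite (INR_sum (fun r : 'I_m => #|[set w in Wset V n | (k <= #|Lset (hit r) D w|)%N]|)).
  apply: Rle_trans; first by apply: sum_le => r _; exact: Hbad r.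
  by rewrite sum_const_all card_ord HN; right.
rewrite HN; have hvn : 0 < v ^ n by apply: pow_lt.
apply: Rle_ge; apply: (Rmult_le_reg_r (v ^ n)) => //.
have -> : INR #|[set w in Wset V n | E w]| / v ^ n * v ^ n = INR #|[set w in Wset V n | E w]|.
  field; lra.
nra.
Qed.

End P3.
Import P3.

Module P4.
Set Implicit Arguments. Unset Strict Implicit. Unset Printing Implicit Defensive.
Local Open Scope R_scope.

Lemma INR_expn' a b : INR (a ^ b)%N = INR a ^ b.
Proof.
elim: b => [|b IH]; first by rewrite expn0.
by rewrite expnS mult_INR IH.
Qed.

Lemma INR_muln a b : INR (a * b)%N = INR a * INR b.
Proof. exact: mult_INR. Qed.

Lemma exp_pow_n x k : exp x ^ k = exp (INR k * x).
Proof.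
elim: k => [|k IH]; first by rewrite /= Rmult_0_l exp_0.
rewrite -tech_pow_Rmult IH -exp_plus S_INR; f_equal; ring.
Qed.

Lemma ffact_le_exp D k : (D ^_ k <= D ^ k)%N.
Proof.
elim: k D => [|k IH] D; first by rewrite ffactn0 expn0.
rewrite ffactnS expnS; apply: leq_mul => //.
apply: leq_trans (IH _) _; case: k {IH} => [|k]; first by rewrite !expn0.
rewrite leq_exp2r //; lia.
Qed.

Lemma succ_pow_le k : INR k.+1 ^ k <= INR k ^ k * exp 1.
Proof.
case: k => [|k]; first by rewrite /= Rmult_1_l; have := exp_ineq1_le 1; lra.
set x := INR k.+1.
have hx : 0 < x by apply: lt_0_INR; lia.
have H1 : INR k.+2 <= x * exp (/ x).
  have := exp_ineq1_le (/ x).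
  have -> : INR k.+2 = x + 1 by rewrite /x (S_INR k.+1).
  move=> h; have := Rmult_le_compat_l _ _ _ (Rlt_le _ _ hx) h.
  have -> : x * (1 + / x) = x + 1 by field; lra.
  done.
have : INR k.+2 ^ k.+1 <= (x * exp (/ x)) ^ k.+1.
  apply: pow_incr; split => //; exact: pos_INR.
rewrite Rpow_mult_distr exp_pow_n -/x.
have -> : x * / x = 1 by field; lra.
done.
Qed.

Lemma fact_lower k : INR k ^ k * exp (- INR k) <= INR (k`!).
Proof.
elim: k => [|k IH].
  by rewrite /= Rmult_1_l Ropp_0 exp_0 /=; lra.
rewrite factS mult_INR.
have E : INR k.+1 ^ k.+1 * exp (- INR k.+1) = INR k.+1 * (INR k.+1 ^ k * exp (-1)) * exp (- INR k).
  rewrite -tech_pow_Rmult S_INR.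
  have -> : exp (- (INR k + 1)) = exp (-1) * exp (- INR k) by rewrite -exp_plus; f_equal; ring.
  ring.
rewrite E Rmult_assoc; apply: Rmult_le_compat_l; first exact: pos_INR.
apply: Rle_trans IH.
apply: Rmult_le_compat_r; first by apply: Rlt_le; apply: exp_pos.
have h1 : exp 1 * exp (-1) = 1 by rewrite -exp_plus Rplus_opp_r exp_0.
have h2 : 0 < exp (-1) by apply: exp_pos.
have := Rmult_le_compat_r (exp (-1)) _ _ (Rlt_le _ _ h2) (succ_pow_le k).
rewrite Rmult_assoc h1 Rmult_1_r; done.
Qed.

Lemma tail_bound (D k : nat) (q : R) :
  (0 < k)%N -> 0 <= q -> INR D * q * exp 2 <= INR k ->
  INR 'C(D, k) * q ^ k <= exp (- INR k).
Proof.
move=> hk hq H.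
have hk' : 0 < INR k by apply: lt_0_INR; lia.
have hF : 0 < INR (k`!) by apply: lt_0_INR; have := fact_gt0 k; lia.
have HC : INR 'C(D, k) * INR (k`!) <= INR D ^ k.
  rewrite -INR_muln bin_ffact -INR_expn'; apply: le_INR; apply/leP; exact: ffact_le_exp.
have Hf := fact_lower k.
(* C q^k <= (D q)^k / k! <= (Dq)^k e^k / k^k *)
have step1 : INR 'C(D, k) * q ^ k <= (INR D * q) ^ k / INR (k`!).
  rewrite Rpow_mult_distr.
  apply: (Rmult_le_reg_r (INR (k`!))) => //.
  have -> : INR D ^ k * q ^ k / INR (k`!) * INR (k`!) = INR D ^ k * q ^ k by field; lra.
  have hqk : 0 <= q ^ k by apply: pow_le.
  nra.
apply: Rle_trans step1 _.
have hkk : 0 < INR k ^ k * exp (- INR k) by apply: Rmult_lt_0_compat; [apply: pow_lt | apply: exp_pos].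
have hDq : 0 <= INR D * q by apply: Rmult_le_pos => //; exact: pos_INR.
have hDqk : 0 <= (INR D * q) ^ k by apply: pow_le.
apply: Rle_trans (_ : (INR D * q) ^ k / (INR k ^ k * exp (- INR k)) <= _).
  apply: Rmult_le_compat_l => //; apply: Rinv_le_contravar => //.
have Hr : INR D * q <= INR k * exp (-2).
  have : exp 2 * exp (-2) = 1 by rewrite -exp_plus Rplus_opp_r exp_0.
  have := exp_pos (-2); have := exp_pos 2; nra.
have : (INR D * q) ^ k <= (INR k * exp (-2)) ^ k by apply: pow_incr.
rewrite [X in _ <= X]Rpow_mult_distr exp_pow_n => H2.
apply: (Rmult_le_reg_r (INR k ^ k * exp (- INR k))) => //.
have -> : (INR D * q) ^ k / (INR k ^ k * exp (- INR k)) * (INR k ^ k * exp (- INR k)) = (INR D * q) ^ k.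
  field; split; [apply: Rgt_not_eq; apply: exp_pos | apply: pow_nonzero; lra].
have -> : exp (- INR k) * (INR k ^ k * exp (- INR k)) = INR k ^ k * exp (INR k * -2).
  have -> : exp (INR k * -2) = exp (- INR k) * exp (- INR k) by rewrite -exp_plus; f_equal; ring.
  ring.
done.
Qed.

End P4.
Import P4.

Module P5.
Set Implicit Arguments. Unset Strict Implicit. Unset Printing Implicit Defensive.
Local Open Scope R_scope.

Lemma Rleb_true x y : x <= y -> Rleb x y.
Proof. by rewrite /Rleb; destruct (Rle_dec x y). Qed.

Lemma ln_ge_half d : 2 <= d -> / 2 < ln d.
Proof.
move=> hd; have := ln_lt_2; case: (Req_dec d 2) => [->|hne] //.
have := ln_increasing 2 d ltac:(lra) ltac:(lra); lra.
Qed.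

Lemma up_facts K : 0 < K ->
  (0 < Z.to_nat (up K))%N /\ K < INR (Z.to_nat (up K)) /\
  forall l : nat, (l < Z.to_nat (up K))%N -> INR l <= K.
Proof.
move=> hK; have [h1 h2] := archimed K.
have hup : (0 < up K)%Z by apply: lt_IZR; lra.
have E : INR (Z.to_nat (up K)) = IZR (up K).
  by rewrite INR_IZR_INZ Znat.Z2Nat.id //; lia.
split; first by apply/ltP; lia.
split; first by rewrite E; lra.
move=> l hl.
have : (INR l + 1 <= INR (Z.to_nat (up K))).
  rewrite -S_INR; apply: le_INR; apply/leP; exact: hl.
rewrite E; lra.
Qed.

Lemma pnorm_bound p m n (u : 'I_m -> R) (y : 'I_n -> R) F :
  1 <= p -> 0 <= F ->
  sumR (fun r => rpow (Rabs (u r)) p) <= F * sumR (fun j => rpow (Rabs (y j)) p) ->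
  pnorm p u <= rpow F (/ p) * pnorm p y.
Proof.
move=> hp hF H; rewrite /pnorm -rpow_mul //; last by apply: sum_ge0 => j _; apply: rpow_ge0.
apply: rpow_le; first by apply: Rlt_le; apply: Rinv_0_lt_compat; lra.
split => //; apply: sum_ge0 => j _; apply: rpow_ge0.
Qed.

Lemma union_arith (C0 w d m K : R) :
  0 < C0 -> 3 + 2 * C0 <= w -> 2 <= d -> m <= C0 * d ^ 3 + 1 -> K = w * d * ln d ->
  m * exp (- K) <= exp (- (/ 2 * w * d * ln d)).
Proof.
move=> hC hw hd hm ->.
have hl := ln_ge_half hd.
have hdp : 0 < d by lra.
set L := ln d.
have hL : / 2 < L by [].
have E1 : exp (- (w * d * L)) = exp (- (/ 2 * w * d * L)) * exp (- (/ 2 * w * d * L)).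
  rewrite -exp_plus; f_equal; field.
rewrite E1; set Z := exp (- (/ 2 * w * d * L)).
have hZ : 0 < Z by apply: exp_pos.
suff : m * Z <= 1 by move=> h; nra.
have E2 : Z * exp (/ 2 * w * d * L) = 1 by rewrite /Z -exp_plus Rplus_opp_l exp_0.
have H3 : C0 * d ^ 3 + 1 <= exp (/ 2 * w * d * L).
  have Ed3 : d ^ 3 = exp (3 * L).
    rewrite /L -(exp_ln d) // exp_ln //.
    have -> : 3 * ln d = ln d + ln d + ln d by ring.
    by rewrite !exp_plus exp_ln //= ; ring.
  have Hw : 1 + C0 <= exp ((w - 3) * L).
    apply: Rle_trans (exp_ineq1_le _).
    have : 0 <= (w - 3 - 2 * C0) * L by apply: Rmult_le_pos; lra.
    nra.
  have hwL : 0 <= w * L by apply: Rmult_le_pos; lra.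
  have Hmono : w * L <= / 2 * w * d * L.
    have : 0 <= (w * L) * (d - 2) by apply: Rmult_le_pos; lra.
    lra.
  have : exp (w * L) <= exp (/ 2 * w * d * L).
    case: (Req_dec (w * L) (/ 2 * w * d * L)) => [->|hne]; first lra.
    apply: Rlt_le; apply: exp_increasing; lra.
  have -> : exp (w * L) = exp ((w - 3) * L) * exp (3 * L) by rewrite -exp_plus; f_equal; ring.
  rewrite -Ed3 => h.
  have hd3 : 1 <= d ^ 3.
    have -> : d ^ 3 = d * d * d by ring.
    have : 1 <= d * d by nra.
    nra.
  have : (1 + C0) * d ^ 3 <= exp ((w - 3) * L) * d ^ 3 by apply: Rmult_le_compat_r; lra.
  nra.
nra.
Qed.

End P5.
Import P5.

Module P6.
Set Implicit Arguments. Unset Strict Implicit. Unset Printing Implicit Defensive.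

Lemma INR_muln2 a b : INR (a * b)%N = Rmult (INR a) (INR b).
Proof. exact: mult_INR. Qed.

Section OSComb.
Variables (m s : nat) (r : 'I_m).
Hypotheses (hs : (0 < s)%N) (hsm : (s <= m)%N).

Definition A1 := [set S : {set 'I_m} | (#|S| == s) && (r \in S)].
Definition A0 := [set S : {set 'I_m} | #|S| == s].

Lemma card_A1 : (#|A1| <= 'C(m.-1, s.-1))%N.
Proof.
have Hinj : {in A1 &, injective (fun S : {set 'I_m} => S :\ r)}.
  move=> S1 S2; rewrite !inE => /andP [_ h1] /andP [_ h2] E.
  by rewrite -(setD1K h1) -(setD1K h2) E.
rewrite -(card_in_imset Hinj).
have : [set S :\ r | S in A1] \subset [set S' : {set 'I_m} | S' \subset [set~ r] & #|S'| == s.-1].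
  apply/subsetP => S' /imsetP [S hS ->]; move: hS; rewrite !inE => /andP [/eqP hc hr].
  apply/andP; split.
    by apply/subsetP => x; rewrite !inE => /andP [].
  by move: (cardsD1 r S); rewrite hr hc add1n => ->.
move/subset_leq_card => H; apply: leq_trans H _.
by rewrite cards_draws cardsC1 card_ord.
Qed.

Lemma card_A0 : #|A0| = 'C(m, s).
Proof. by rewrite /A0 card_draws card_ord. Qed.

Lemma bin_rel : (m * 'C(m.-1, s.-1) = s * 'C(m, s))%N.
Proof. by case: s hs => // s' _; rewrite mul_bin_diag. Qed.

Local Open Scope R_scope.

Lemma os_q :
  INR #|[pred t : {set 'I_m} * {ffun 'I_m -> bool} | (#|t.1| == s) && (r \in t.1)]|
  <= (INR s / INR m) * INR #|[pred t : {set 'I_m} * {ffun 'I_m -> bool} | #|t.1| == s]|.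
Proof.
have E1 : #|[pred t : {set 'I_m} * {ffun 'I_m -> bool} | (#|t.1| == s) && (r \in t.1)]|
          = (#|A1| * #|[set: {ffun 'I_m -> bool}]|)%N.
  rewrite -cardsX; apply: eq_card => -[S f]; by rewrite !inE andbT.
have E0 : #|[pred t : {set 'I_m} * {ffun 'I_m -> bool} | #|t.1| == s]|
          = (#|A0| * #|[set: {ffun 'I_m -> bool}]|)%N.
  rewrite -cardsX; apply: eq_card => -[S0 f]; by rewrite !inE ?andbT.
rewrite E1 E0 !INR_muln2 card_A0.
have hm : 0 < INR m by apply: lt_0_INR; apply/ltP; lia.
have HF : 0 <= INR #|[set: {ffun 'I_m -> bool}]| by apply: pos_INR.
have H1 : INR #|A1| * INR m <= INR s * INR 'C(m, s).
  rewrite -!INR_muln2; apply: le_INR; apply/leP.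
  rewrite -bin_rel mulnC; apply: leq_mul => //; exact: card_A1.
rewrite -Rmult_assoc; apply: Rmult_le_compat_r => //.
apply: (Rmult_le_reg_r (INR m)) => //.
have -> : INR s / INR m * INR 'C(m, s) * INR m = INR s * INR 'C(m, s) by field; lra.
done.
Qed.

Lemma os_V_pos : (0 < #|[pred t : {set 'I_m} * {ffun 'I_m -> bool} | #|t.1| == s]|)%N.
Proof.
have E0 : #|[pred t : {set 'I_m} * {ffun 'I_m -> bool} | #|t.1| == s]|
          = (#|A0| * #|[set: {ffun 'I_m -> bool}]|)%N.
  rewrite -cardsX; apply: eq_card => -[S0 f]; by rewrite !inE ?andbT.
rewrite E0 card_A0 muln_gt0 bin_gt0 hsm /= cardsT card_ffun expn_gt0.
by rewrite card_bool.
Qed.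
End OSComb.

End P6.
Import P6.

Module MainAux.
Set Implicit Arguments. Unset Strict Implicit. Unset Printing Implicit Defensive.
Local Open Scope R_scope.

Lemma F_cs K p : 0 < K -> 1 <= p ->
  rpow (rpow K (p - 1) * rpow 1 p * INR 1) (/ p) = rpow K (1 - / p).
Proof.
move=> hK hp.
rewrite (rpow_pos _ Rlt_0_1) /Rpower ln_1 Rmult_0_r exp_0 /= !Rmult_1_r rpow_rpow.
f_equal; field; lra.
Qed.

Lemma F_os K p s : 0 < K -> 1 <= p -> 0 < s ->
  rpow (rpow K (p - 1) * rpow (/ sqrt s) p * s) (/ p) = rpow s (/ p - / 2) * rpow K (1 - / p).
Proof.
move=> hK hp hs.
have hsq : 0 < sqrt s by apply: sqrt_lt_R0.
have hal : 0 < / sqrt s by apply: Rinv_0_lt_compat.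
rewrite rpow_mul; [|apply: Rmult_le_pos; apply: rpow_ge0| lra].
rewrite rpow_mul; try apply: rpow_ge0.
rewrite !rpow_rpow.
have -> : (p - 1) * / p = 1 - / p by field; lra.
have -> : p * / p = 1 by field; lra.
rewrite rpow1; last lra.
have -> : / p - / 2 = / p + - / 2 by ring.
rewrite rpow_plus // (rpow_pos (- / 2) hs) Rpower_Ropp Rpower_sqrt //.
ring.
Qed.

Lemma Rle_nat (a b : nat) : (a <= b)%N -> INR a <= INR b.
Proof. by move=> h; apply: le_INR; apply/leP. Qed.


End MainAux.
Import MainAux.

Unset Implicit Arguments.
Local Open Scope R_scope.

Theorem mainTheorem15 (p C0 C1 : R) :
  1 <= p < 2 -> 0 < C0 -> 0 < C1 ->
  exists omega0 c : R, 0 < c /\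
  forall (d n : nat) (omega : R) (y : 'I_n -> R),
    (2 <= d)%N -> (d ^ 2 <= n)%N -> omega0 <= omega ->
    (forall m : nat,
       INR m - 1 < C0 * INR d ^ 2 <= INR m ->
       probCS (fun w : CS_config m n =>
         Rleb (pnorm p (mxapply (CS_matrix w) (restrict (d ^ 2) y)))
              (rpow (omega * INR d * ln (INR d)) (1 - / p) * pnorm p y))
       >= 1 - exp (- (c * omega * INR d * ln (INR d))))
    /\
    (forall (B : R) (m s : nat),
       2 < B <= INR d ->
       INR m - 1 < C0 * B * INR d * ln (INR d) <= INR m ->
       INR s - 1 < C1 * (ln (INR d) / ln B) <= INR s ->
       (s <= m)%N ->
       probOS s (fun w : OS_config m n =>
         Rleb (pnorm p (mxapply (OS_matrix s w) (restrict (d ^ 2) y)))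
              (rpow (INR s) (/ p - / 2)
               * rpow (omega * INR d * ln (INR d)) (1 - / p) * pnorm p y))
       >= 1 - exp (- (c * omega * INR d * ln (INR d)))).
Proof.
move=> [hp1 hp2] hC0 hC1.
set M := (C1 + 1) / C0.
have hM : 0 < M by apply: Rdiv_lt_0_compat; lra.
have hM1 : / C0 <= M.
  rewrite /M /Rdiv; have := Rinv_0_lt_compat _ hC0; nra.
exists (18 * M + 3 + 2 * C0), (/ 2); split; first lra.
move=> d n omega y hd hn hw.
have hdR : 2 <= INR d by have := Rle_nat hd; rewrite /= ; lra.
have hl := ln_ge_half hdR.
have hlpos : 0 < ln (INR d) by lra.
have hwpos : 0 < omega by lra.
set K := omega * INR d * ln (INR d).
have hK : 0 < K by rewrite /K; apply: Rmult_lt_0_compat => //; apply: Rmult_lt_0_compat; lra.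
have hK18 : 18 * M <= K.
  rewrite /K; have : 0 <= (omega - 18 * M) by lra.
  have : 1 <= INR d * ln (INR d) by nra.
  nra.
have [hk0 [hkK hkl]] := up_facts hK.
set k := Z.to_nat (up K).
have hkK2 : K < INR k := hkK.
have hkl2 : forall l : nat, (l < k)%N -> INR l <= K := hkl.
have hk02 : (0 < k)%N := hk0.
have He2 : exp 2 <= 9.
  have -> : (2 : R) = 1 + 1 by ring.
  rewrite exp_plus; have := exp_le_3; have := exp_pos 1; nra.
have HD : INR (d ^ 2) = INR d ^ 2 by rewrite INR_expn.
have Hfin : forall (m : nat) (q : R), INR m <= C0 * INR d ^ 3 + 1 -> 0 <= q ->
    INR (d ^ 2) * q * exp 2 <= INR k ->
    1 - INR m * (INR 'C(d ^ 2, k) * q ^ k) >= 1 - exp (- (/ 2 * omega * INR d * ln (INR d))).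
  move=> m q hm hq hDq.
  have T := tail_bound hk02 hq hDq.
  have U := union_arith hC0 (ltac:(lra) : 3 + 2 * C0 <= omega) hdR hm (erefl K).
  have hmR : 0 <= INR m by apply: pos_INR.
  have : exp (- INR k) <= exp (- K).
    apply: Rlt_le; apply: exp_increasing; lra.
  move=> hkK'.
  have h1 := Rmult_le_compat_l _ _ _ hmR T.
  have h2 := Rmult_le_compat_l _ _ _ hmR hkK'.
  lra.
split.
-
  move=> m [hm1 hm2].
  have hmpos : 0 < INR m.
    have : 0 < C0 * INR d ^ 2 by apply: Rmult_lt_0_compat => //; nra.
    lra.
  have hm : (0 < m)%N by apply/ltP; apply: INR_lt; rewrite /=; lra.
  pose V := fun t : 'I_m * bool => true.
  pose hit := fun (r : 'I_m) (t : 'I_m * bool) => t.1 == r.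
  pose E := fun w : CS_config m n =>
         Rleb (pnorm p (mxapply (CS_matrix w) (restrict (d ^ 2) y)))
              (rpow K (1 - / p) * pnorm p y).
  have -> : probCS E = INR #|[set w in Wset V n | E w]| / INR #|Wset V n|.
    rewrite /probCS; congr (INR _ / INR _); apply: eq_card => w; rewrite !inE.
      by have -> : [forall j, V (w j)] by apply/forallP.
    by symmetry; apply/forallP.
  have hVpos : (0 < #|V|)%N.
    rewrite (eq_card (B := predT)) // card_prod card_ord card_bool; lia.
  have Hq : forall r, INR #|[pred t | V t && hit r t]| <= / INR m * INR #|V|.
    move=> r.
    have -> : #|[pred t | V t && hit r t]| = #|setX [set r] [set: bool]|.
      apply: eq_card => -[a b]; rewrite !inE /V /hit /= andbT; done.
    have -> : #|V| = (m * 2)%N.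
      by rewrite (eq_card (B := predT)) // card_prod card_ord card_bool.
    rewrite cardsX cards1 cardsT card_bool INR_muln2.
    rewrite INR_muln2 (_ : INR 1 = 1) //; right; field; lra.
  have HE : forall w, w \in Wset V n -> (forall r, (#|Lset (hit r) (d ^ 2) w| < k)%N) -> E w.
    move=> w _ Hload.
    apply: Rleb_true.
    rewrite -(F_cs hK hp1).
    apply: pnorm_bound => //.
      apply: Rmult_le_pos; [apply: Rmult_le_pos; apply: rpow_ge0 | apply: pos_INR].
    apply: (@det_bound m n (CS_matrix w) (fun r j => (w j).1 == r) y (d ^ 2) p 1 K 1%N) => //.
    + lra.
    + by move=> r j; rewrite /CS_matrix => /negbTE ->.
    + move=> r j; rewrite /CS_matrix; case: ifP => _; last by rewrite Rabs_R0; lra.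
      by case: (w j).2; rewrite /sgnR ?Rabs_R1 ?Rabs_Ropp ?Rabs_R1; lra.
    + move=> r; apply: hkl2; exact: Hload r.
    + move=> j; apply: leq_trans (_ : #|[set (w j).1]| <= 1)%N; last by rewrite cards1.
      apply: subset_leq_card; apply/subsetP => r; rewrite !inE => /eqP ->; done.
  have HP := prob_bound hn hVpos HE Hq.
  apply: Rge_trans HP _.
  apply: Hfin.
  + have : INR d ^ 2 <= INR d ^ 3.
      have -> : INR d ^ 3 = INR d * INR d ^ 2 by ring.
      have : 0 <= INR d ^ 2 by nra.
      nra.
    nra.
  + by apply: Rlt_le; apply: Rinv_0_lt_compat.
  + rewrite HD.
    have h1 : INR d ^ 2 * / INR m <= / C0.
      apply: (Rmult_le_reg_r (INR m)) => //.
      have -> : INR d ^ 2 * / INR m * INR m = INR d ^ 2 by field; lra.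
      apply: (Rmult_le_reg_l C0) => //.
      have -> : C0 * (/ C0 * INR m) = INR m by field; lra.
      lra.
    have h2 : 0 <= INR d ^ 2 * / INR m.
      apply: Rmult_le_pos; [nra | apply: Rlt_le; apply: Rinv_0_lt_compat => //].
    have := exp_pos 2. nra.
-
  move=> B m s [hB1 hB2] [hm1 hm2] [hs1 hs2] hsm.
  have hlB := ln_ge_half (Rlt_le _ _ hB1).
  have hratio : 0 < ln (INR d) / ln B by apply: Rdiv_lt_0_compat; lra.
  have hsR : 0 < INR s by have := Rmult_lt_0_compat _ _ hC1 hratio; lra.
  have hs0 : (0 < s)%N by apply/ltP; apply: INR_lt; rewrite /=; lra.
  have hmR : 0 < INR m.
    have : 0 < C0 * B * INR d * ln (INR d).
      repeat apply: Rmult_lt_0_compat => //; lra.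
    lra.
  pose V := fun t : {set 'I_m} * {ffun 'I_m -> bool} => #|t.1| == s.
  pose hit := fun (r : 'I_m) (t : {set 'I_m} * {ffun 'I_m -> bool}) => r \in t.1.
  pose E := fun w : OS_config m n =>
         Rleb (pnorm p (mxapply (OS_matrix s w) (restrict (d ^ 2) y)))
              (rpow (INR s) (/ p - / 2) * rpow K (1 - / p) * pnorm p y).
  have -> : probOS s E = INR #|[set w in Wset V n | E w]| / INR #|Wset V n|.
    rewrite /probOS; congr (INR _ / INR _); apply: eq_card => w; by rewrite !inE.
  have EV : #|V| = #|[pred t : {set 'I_m} * {ffun 'I_m -> bool} | #|t.1| == s]|.
    by apply: eq_card.
  have hVpos : (0 < #|V|)%N by rewrite EV; exact: (os_V_pos hsm).
  have Hq : forall r, INR #|[pred t | V t && hit r t]| <= INR s / INR m * INR #|V|.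
    move=> r; rewrite EV; exact: (os_q r hs0 hsm).
  have HE : forall w, w \in Wset V n -> (forall r, (#|Lset (hit r) (d ^ 2) w| < k)%N) -> E w.
    move=> w hwW Hload.
    apply: Rleb_true.
    rewrite -(F_os hK hp1 hsR).
    have hsq : 0 < sqrt (INR s) by apply: sqrt_lt_R0.
    have hal : 0 < / sqrt (INR s) by apply: Rinv_0_lt_compat.
    apply: pnorm_bound => //.
      apply: Rmult_le_pos; [apply: Rmult_le_pos; apply: rpow_ge0 | lra].
    apply: (@det_bound m n (OS_matrix s w) (fun r j => r \in (w j).1) y (d ^ 2) p (/ sqrt (INR s)) K s) => //.
    + lra.
    + by move=> r j; rewrite /OS_matrix => /negbTE ->.
    + move=> r j; rewrite /OS_matrix; case: ifP => _; last by rewrite Rabs_R0; lra.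
      rewrite /Rdiv Rabs_mult (Rabs_right (/ sqrt (INR s))); last lra.
      by case: ((w j).2 r); rewrite /sgnR ?Rabs_R1 ?Rabs_Ropp ?Rabs_R1; lra.
    + move=> r; apply: hkl2; exact: Hload r.
    + move=> j; move: hwW; rewrite inE => /forallP /(_ j) /eqP <-.
      by apply: eq_leq; apply: eq_card => r; rewrite inE.
  have HP := prob_bound hn hVpos HE Hq.
  apply: Rge_trans HP _.
  have hlnd : ln (INR d) <= INR d.
    have := exp_ineq1_le (ln (INR d)); rewrite exp_ln; lra.
  have hBd : 0 <= B * INR d by nra.
  apply: Hfin.
  + have h1 : B * INR d * ln (INR d) <= INR d ^ 3.
      have -> : INR d ^ 3 = INR d * INR d * INR d by ring.
      have : B * INR d <= INR d * INR d by nra.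
      have : 0 <= INR d * INR d by nra.
      nra.
    nra.
  + by apply: Rlt_le; apply: Rdiv_lt_0_compat.
  + rewrite HD.
    have hs3 : INR s <= 2 * C1 * ln (INR d) + 1.
      have : ln (INR d) / ln B <= 2 * ln (INR d).
        apply: (Rmult_le_reg_r (ln B)); first lra.
        have -> : ln (INR d) / ln B * ln B = ln (INR d) by field; lra.
        nra.
      nra.
    have hs4 : INR s <= (C1 + 1) * B * ln (INR d).
      have : 1 <= B * ln (INR d) by nra.
      have : 2 * ln (INR d) <= B * ln (INR d) by nra.
      nra.
    have h5 : C0 * INR d * INR s <= (C1 + 1) * INR m.
      have : C0 * INR d * INR s <= C0 * INR d * ((C1 + 1) * B * ln (INR d)).
        apply: Rmult_le_compat_l => //; nra.
      nra.
    have h6 : INR d * (INR s / INR m) <= M.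
      rewrite /M; apply: (Rmult_le_reg_r (C0 * INR m)); first nra.
      have -> : INR d * (INR s / INR m) * (C0 * INR m) = C0 * INR d * INR s by field; lra.
      have -> : (C1 + 1) / C0 * (C0 * INR m) = (C1 + 1) * INR m by field; lra.
      done.
    have h7 : 0 <= INR d * (INR s / INR m).
      apply: Rmult_le_pos; [lra | apply: Rlt_le; apply: Rdiv_lt_0_compat => //].
    have h8 : K >= 9 * M * INR d.
      rewrite /K; have : 0 <= omega - 18 * M by lra.
      have : 0 <= INR d * (ln (INR d) - / 2) by apply: Rmult_le_pos; lra.
      nra.
    have -> : INR d ^ 2 * (INR s / INR m) * exp 2 = INR d * (INR d * (INR s / INR m)) * exp 2 by ring.
    have := exp_pos 2.
    have : INR d * (INR d * (INR s / INR m)) <= INR d * M by apply: Rmult_le_compat_l; lra.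
    nra.
Qed.
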